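(* Let $A\in\mathbb{R}^{m\times n}$, let $a=\max_{i,j}|A_{i,j}|$, and let $(U,V)$ be an iterative play system for $A$. Let $s,t\ge 0$ be integers and suppose that every row index and every column index is $E$-eligible in the interval $[s,s+t]$. Then $$\max V(s+t)-\min U(s+t)\le 4a(t+1).$$
   Context: An iterative play system $(U,V)$ for $A\in\mathbb{R}^{m\times n}$ is a pair of sequences $U(0),U(1),\dots\in\mathbb{R}^n$ and $V(0),V(1),\dots\in\mathbb{R}^m$ such that $\min U(0)=\max V(0)$ and, for each $t$, $U(t+1)=U(t)+A_{i(t),*}$ and $V(t+1)=V(t)+A_{*,j(t)}$ for some indices $i(t)\in\{1,\dots,m\}$, $j(t)\in\{1,\dots,n\}$, where $A_{i,*}$ is the $i$th row and $A_{*,j}$ the $j$th column of $A$. Write $u_j(t)$, $v_i(t)$ for the entries of $U(t)$, $V(t)$, and $\max$, $\min$ of a vector for its largest/smallest entry. With $a=\max_{i,j}|A_{i,j}|$, row $i$ is $E$-eligible in $[t,t']$ if there exists an integer $t_1\in[t,t']$ with $v_i(t_1)\ge\max V(t_1)-2a$; column $j$ is $E$-eligible in $[t,t']$ if there exists $t_1\in[t,t']$ with $u_j(t_1)\le\min U(t_1)+2a$. *)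

(* Defs.v *)
From mathcomp Require Import all_boot all_order all_algebra.
Set Implicit Arguments. Unset Strict Implicit. Unset Printing Implicit Defensive.
Import Order.TTheory GRing.Theory Num.Theory.
Local Open Scope ring_scope.

Definition vmax (R : realDomainType) (k : nat) (v : 'I_k.+1 -> R) : R :=
  \big[Num.max/v ord0]_(i < k.+1) v i.
Definition vmin (R : realDomainType) (k : nat) (v : 'I_k.+1 -> R) : R :=
  \big[Num.min/v ord0]_(i < k.+1) v i.

Definition amax (R : realDomainType) (m n : nat) (A : 'M[R]_(m.+1, n.+1)) : R :=
  \big[Num.max/0]_(i < m.+1) \big[Num.max/0]_(j < n.+1) `|A i j|.

Definition iterative_play_system (R : realDomainType) (m n : nat)
  (A : 'M[R]_(m.+1, n.+1)) (U : nat -> 'I_n.+1 -> R) (V : nat -> 'I_m.+1 -> R) : Prop :=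
  vmin (U 0%N) = vmax (V 0%N) /\
  forall t : nat,
    (exists i : 'I_m.+1, forall j, U t.+1 j = U t j + A i j) /\
    (exists j : 'I_n.+1, forall i, V t.+1 i = V t i + A i j).

Definition row_E_eligible (R : realDomainType) (m n : nat)
  (A : 'M[R]_(m.+1, n.+1)) (V : nat -> 'I_m.+1 -> R) (i : 'I_m.+1) (t t' : nat) : Prop :=
  exists t1 : nat, (t <= t1 <= t')%N /\ V t1 i >= vmax (V t1) - 2 * amax A.

Definition col_E_eligible (R : realDomainType) (m n : nat)
  (A : 'M[R]_(m.+1, n.+1)) (U : nat -> 'I_n.+1 -> R) (j : 'I_n.+1) (t t' : nat) : Prop :=
  exists t1 : nat, (t <= t1 <= t')%N /\ U t1 j <= vmin (U t1) + 2 * amax A.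

(* Main.v *)
Set Warnings "-all".
Require Import Defs.
From mathcomp Require Import all_boot all_order all_algebra.
From mathcomp Require Import lra zify.
Import Order.TTheory GRing.Theory Num.Theory.
Local Open Scope ring_scope.

Section H.
Variable R : realFieldType.

Lemma vmax_ge k (v : 'I_k.+1 -> R) i : v i <= vmax v.
Proof. by rewrite /vmax (bigD1 i) //= le_max lexx. Qed.

Lemma vmin_le k (v : 'I_k.+1 -> R) i : vmin v <= v i.
Proof. by rewrite /vmin (bigD1 i) //= ge_min lexx. Qed.

Lemma vmax_ex k (v : 'I_k.+1 -> R) : exists i, vmax v = v i.
Proof.
rewrite /vmax; apply: (big_ind (fun z => exists i, z = v i)).
- by exists ord0.
- move=> x y [i ->] [j ->]; have [h|h] := leP (v i) (v j).
  + by exists j.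
  + by exists i.
- by move=> i _; exists i.
Qed.

Lemma vmin_ex k (v : 'I_k.+1 -> R) : exists i, vmin v = v i.
Proof.
rewrite /vmin; apply: (big_ind (fun z => exists i, z = v i)).
- by exists ord0.
- move=> x y [i ->] [j ->]; have [h|h] := leP (v i) (v j).
  + by exists i.
  + by exists j.
- by move=> i _; exists i.
Qed.

Lemma amax_ge m n (A : 'M[R]_(m.+1, n.+1)) i j : `|A i j| <= amax A.
Proof.
rewrite /amax (bigD1 i) //= le_max; apply/orP; left.
by rewrite (bigD1 j) //= le_max lexx.
Qed.

Lemma amax_ge0 m n (A : 'M[R]_(m.+1, n.+1)) : 0 <= amax A.
Proof. have := amax_ge _ _ A ord0 ord0; have := normr_ge0 (A ord0 ord0); lra. Qed.

Lemma amax_bnd m n (A : 'M[R]_(m.+1, n.+1)) i j : - amax A <= A i j <= amax A.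
Proof. by rewrite -ler_norml amax_ge. Qed.

Variable p : nat.
Variable W : nat -> 'I_p.+1 -> R.
Variable a : R.
Hypothesis step : forall k i, W k i - a <= W k.+1 i <= W k i + a.

Lemma W_lo k d i : W k i - d%:R * a <= W (k + d)%N i.
Proof.
elim: d => [|d IH]; first by rewrite addn0 mul0r subr0.
rewrite addnS; have /andP[h1 h2] := step (k + d) i.
rewrite -natr1 mulrDl mul1r; lra.
Qed.

Lemma W_hi k d i : W (k + d)%N i <= W k i + d%:R * a.
Proof.
elim: d => [|d IH]; first by rewrite addn0 mul0r addr0.
rewrite addnS; have /andP[h1 h2] := step (k + d) i.
rewrite -natr1 mulrDl mul1r; lra.
Qed.

Lemma Wmax_hi k d : vmax (W (k + d)%N) <= vmax (W k) + d%:R * a.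
Proof.
have [i ->] := vmax_ex _ (W (k + d)%N).
apply: le_trans (W_hi k d i) _; rewrite lerD2r; exact: vmax_ge.
Qed.

Lemma Wmin_lo k d : vmin (W k) - d%:R * a <= vmin (W (k + d)%N).
Proof.
have [i ->] := vmin_ex _ (W (k + d)%N).
apply: le_trans _ (W_lo k d i); rewrite lerD2r; exact: vmin_le.
Qed.

End H.

Lemma sum_ind (R : realFieldType) k (i0 : 'I_k) (f : 'I_k -> R) :
  \sum_i (i == i0)%:R * f i = f i0.
Proof.
rewrite (bigD1 i0) //= eqxx mul1r big1 ?addr0 // => i /negbTE ->.
by rewrite mul0r.
Qed.

Lemma weights (R : realFieldType) (m n : nat) (A : 'M[R]_(m.+1, n.+1))
  (U : nat -> 'I_n.+1 -> R) (V : nat -> 'I_m.+1 -> R) :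
  iterative_play_system A U V -> forall T : nat,
  exists x : 'I_m.+1 -> R, exists y : 'I_n.+1 -> R,
   (forall i, 0 <= x i) /\ (forall j, 0 <= y j) /\
       \sum_i x i = T%:R /\ \sum_j y j = T%:R /\
       (forall j, U T j = U 0%N j + \sum_i x i * A i j) /\
       (forall i, V T i = V 0%N i + \sum_j A i j * y j).
Proof.
move=> [_ hs]; elim=> [|T [x [y [x0 [y0 [sx [sy [hU hV]]]]]]]].
  exists (fun _ => 0), (fun _ => 0); do !split => //.
  - by rewrite big1.
  - by rewrite big1.
  - by move=> j; rewrite big1 ?addr0 // => i _; rewrite mul0r.
  - by move=> i; rewrite big1 ?addr0 // => j _; rewrite mulr0.
have [[i0 hi0] [j0 hj0]] := hs T.
exists (fun i => x i + (i == i0)%:R), (fun j => y j + (j == j0)%:R); do !split.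
- by move=> i; rewrite addr_ge0.
- by move=> j; rewrite addr_ge0.
- by rewrite big_split /= sx (bigD1 i0) //= eqxx big1 ?addr0 ?natr1 // => k /negbTE ->.
- by rewrite big_split /= sy (bigD1 j0) //= eqxx big1 ?addr0 ?natr1 // => k /negbTE ->.
- move=> j; rewrite hi0.
  rewrite (eq_bigr (fun i => x i * A i j + (i == i0)%:R * A i j)); last by move=> i _; rewrite mulrDl.
  by rewrite big_split /= sum_ind hU addrA.
- move=> i; rewrite hj0.
  rewrite (eq_bigr (fun j => A i j * y j + (j == j0)%:R * A i j)); last by move=> j _; rewrite mulrDr [_ * _%:R]mulrC.
  by rewrite big_split /= sum_ind hV addrA.
Qed.

Lemma sum_lb (R : realFieldType) k (x f : 'I_k -> R) c :
  (forall i, 0 <= x i) -> (forall i, c <= f i) -> (\sum_i x i) * c <= \sum_i x i * f i.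
Proof. by move=> h0 h; rewrite mulr_suml; apply: ler_sum => i _; rewrite ler_wpM2l. Qed.

Lemma sum_ub (R : realFieldType) k (x f : 'I_k -> R) c :
  (forall i, 0 <= x i) -> (forall i, f i <= c) -> \sum_i x i * f i <= (\sum_i x i) * c.
Proof. by move=> h0 h; rewrite mulr_suml; apply: ler_sum => i _; rewrite ler_wpM2l. Qed.

Theorem lemma3 (R : realFieldType) (m n : nat) (A : 'M[R]_(m.+1, n.+1))
  (U : nat -> 'I_n.+1 -> R) (V : nat -> 'I_m.+1 -> R) (s t : nat) :
  iterative_play_system A U V ->
  (forall i : 'I_m.+1, row_E_eligible A V i s (s + t)) ->
  (forall j : 'I_n.+1, col_E_eligible A U j s (s + t)) ->
  vmax (V (s + t)%N) - vmin (U (s + t)%N) <= 4 * amax A * (t.+1)%:R.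
Proof.
move=> hips hrow hcol.
set T := (s + t)%N.
have a0 := amax_ge0 _ _ _ A.
have [hips0 hipsS] := hips.
have stepV : forall k i, V k i - amax A <= V k.+1 i <= V k i + amax A.
  move=> k i; have [_ [j ->]] := hipsS k.
  have /andP[b1 b2] := amax_bnd _ _ _ A i j; apply/andP; split; lra.
have stepU : forall k j, U k j - amax A <= U k.+1 j <= U k j + amax A.
  move=> k j; have [[i ->] _] := hipsS k.
  have /andP[b1 b2] := amax_bnd _ _ _ A i j; apply/andP; split; lra.
have tR : forall d, (d <= t)%N -> d%:R * amax A <= t%:R * amax A.
  by move=> d hd; apply: ler_wpM2r => //; rewrite ler_nat.
have hV : forall i, vmax (V T) - 2 * amax A * (t.+1)%:R <= V T i.
  move=> i; have [t1 [/andP [h1 h2] h]] := hrow i.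
  have eT : T = (t1 + (T - t1))%N by rewrite subnKC.
  have dt := tR (T - t1)%N (ltac:(rewrite /T; lia)).
  have l1 := W_lo _ _ _ _ stepV t1 (T - t1)%N i.
  have l2 := Wmax_hi _ _ _ _ stepV t1 (T - t1)%N.
  rewrite -eT in l1 l2; rewrite -natr1; lra.
have hU : forall j, U T j <= vmin (U T) + 2 * amax A * (t.+1)%:R.
  move=> j; have [t1 [/andP [h1 h2] h]] := hcol j.
  have eT : T = (t1 + (T - t1))%N by rewrite subnKC.
  have dt := tR (T - t1)%N (ltac:(rewrite /T; lia)).
  have l1 := W_hi _ _ _ _ stepU t1 (T - t1)%N j.
  have l2 := Wmin_lo _ _ _ _ stepU t1 (T - t1)%N.
  rewrite -eT in l1 l2; rewrite -natr1; lra.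
have [x [y [x0 [y0 [sx [sy [eU eV]]]]]]] := weights _ _ _ A U V hips T.
set c := 2 * amax A * (t.+1)%:R.
have P1 : \sum_i x i * V T i = \sum_i x i * V 0%N i + \sum_i \sum_j x i * (A i j * y j).
  rewrite -big_split /=; apply: eq_bigr => i _; by rewrite eV mulrDr mulr_sumr.
have Q1 : \sum_j U T j * y j = \sum_j U 0%N j * y j + \sum_i \sum_j x i * (A i j * y j).
  rewrite exchange_big -big_split /=; apply: eq_bigr => j _.
  by rewrite eU mulrDl mulr_suml; congr (_ + _); apply: eq_bigr => i _; rewrite mulrA.
have B1 := sum_lb _ _ x (V T) _ x0 hV.
have B2 := sum_ub _ _ x (V 0%N) _ x0 (fun i => vmax_ge _ _ (V 0%N) i).
have B3 : \sum_j U T j * y j <= (\sum_j y j) * (vmin (U T) + c).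
  rewrite (eq_bigr (fun j => y j * U T j)); last by move=> j _; rewrite mulrC.
  exact: sum_ub.
have B4 : (\sum_j y j) * vmin (U 0%N) <= \sum_j U 0%N j * y j.
  have S := sum_lb _ _ y (U 0%N) (vmin (U 0%N)) y0 (vmin_le _ _ (U 0%N)).
  rewrite (_ : \sum_j U 0%N j * y j = \sum_j y j * U 0%N j) //.
  by apply: eq_bigr => j _; rewrite mulrC.
rewrite sx in B1 B2; rewrite sy in B3 B4.
case: (posnP T) => [T0|Tp].
  have t0 : t = 0%N by move: T0; rewrite /T; lia.
  rewrite T0 t0 -hips0 subrr; lra.
have TR : 0 < T%:R :> R by rewrite ltr0n.
have : T%:R * (vmax (V T) - vmin (U T) - 4 * amax A * (t.+1)%:R) <= 0.
  rewrite /c in B1 B3; rewrite hips0 in B4; lra.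
rewrite pmulr_rle0 //; lra.
Qed.
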